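(* Let $\pi$ be a permutation and let $\omega$ be an occurrence in $\pi$ of the mesh pattern $j_2=(34251,\{(2,4),(2,5)\})$. Then the entries of $\omega$ playing roles $1,2,3,4$ form (in the same roles) an occurrence in $S(\pi)$ of the mesh pattern $W_2=(3241,\{(1,4)\})$ if and only if $\omega$ extends to an occurrence in $\pi$ of one of the patterns $J_{2,1},\dots,J_{2,12}$ below in such a way that the uncircled entries of the pattern are exactly the entries of $\omega$, in the same order. Each pattern is given as: underlying pattern (listed by position); circled entries (as (position, value) in the pattern); shaded boxes; decorated region. $J_{2,1}$: $345261$; circled $(2,4)$; shaded $\{(1,3),(1,4),(1,5),(1,6),(2,5),(2,6),(3,5),(3,6)\}$; no decoration. $J_{2,2}$: $3465271$; circled $(2,4),(3,6)$; shaded $\{(0,5),(1,3),(1,4),(1,5),(1,6),(1,7),(2,5),(2,6),(2,7),(3,6),(3,7),(4,5),(4,6),(4,7)\}$; decorated $\{(3,5)\}$. $J_{2,3}$: $73465281$; circled $(1,7),(3,4),(4,6)$; shaded $\{(1,5),(1,6),(1,7),(1,8)\}\cup\{(2,b):3\le b\le 8\}\cup\{(3,5),(3,6),(3,7),(3,8),(4,6),(4,7),(4,8),(5,5),(5,6),(5,7),(5,8)\}$; decorated $\{(4,5)\}$. $J_{2,4}$: $83465271$; circled $(1,8),(3,4),(4,6)$; shaded and decorated as for $J_{2,3}$. $J_{2,5}$: $3475261$; circled $(2,4),(3,7)$; shaded $\{(0,5),(0,6),(1,3),(1,4),(1,5),(1,6),(1,7),(2,5),(2,6),(2,7),(3,7),(4,5),(4,6),(4,7)\}$;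 decorated $\{(3,5),(3,6)\}$. $J_{2,6}$: $83475261$; circled $(1,8),(3,4),(4,7)$; shaded $\{(1,5),(1,6),(1,7),(1,8)\}\cup\{(2,b):3\le b\le 8\}\cup\{(3,5),(3,6),(3,7),(3,8),(4,7),(4,8),(5,5),(5,6),(5,7),(5,8)\}$; decorated $\{(4,5),(4,6)\}$. $J_{2,7}$: $354261$; circled $(2,5)$; shaded $\{(0,4),(1,3),(1,4),(1,5),(1,6),(2,5),(2,6),(3,4),(3,5),(3,6)\}$; decorated $\{(2,4)\}$. $J_{2,8}$: $6354271$; circled $(1,6),(3,5)$; shaded $\{(1,4),(1,5),(1,6),(1,7)\}\cup\{(2,b):3\le b\le 7\}\cup\{(3,5),(3,6),(3,7),(4,4),(4,5),(4,6),(4,7)\}$; decorated $\{(3,4)\}$. $J_{2,9}$: $7354261$; circled $(1,7),(3,5)$; shaded and decorated as for $J_{2,8}$. $J_{2,10}$: $364251$; circled $(2,6)$; shaded $\{(0,4),(0,5),(1,3),(1,4),(1,5),(1,6),(2,6),(3,4),(3,5),(3,6)\}$; decorated $\{(2,4),(2,5)\}$. $J_{2,11}$: $7364251$; circled $(1,7),(3,6)$; shaded $\{(1,4),(1,5),(1,6),(1,7)\}\cup\{(2,b):3\le b\le 7\}\cup\{(3,6),(3,7),(4,4),(4,5),(4,6),(4,7)\}$; decorated $\{(3,4),(3,5)\}$. $J_{2,12}$: $34251$; no circled entries; shaded $\{(1,3),(1,4),(1,5),(2,4),(2,5)\}$; no decoration.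
   Context: Permutations are in one-line notation. For a sequence $w$ of distinct integers, the stack-sort $S(w)$ is defined by $S(\varepsilon)=\varepsilon$ and $S(\alpha m\beta)=S(\alpha)S(\beta)m$ where $m$ is the largest entry of $w$. An occurrence of a classical pattern $p$ of length $k$ in a permutation $\sigma$ of length $n$ is a set of entries at positions $i_1<\dots<i_k$ whose values are order-isomorphic to $p$; the entry corresponding to letter $r$ of $p$ plays role $r$. With values $v_1<\dots<v_k$ of the occurrence and $i_0=v_0=0$, $i_{k+1}=v_{k+1}=n+1$, the box $(a,b)$ ($0\le a,b\le k$) is the set of entries $\sigma(x)$ with $i_a<x<i_{a+1}$, $v_b<\sigma(x)<v_{b+1}$. A pattern with shaded boxes $R$ and decorated region $D$ occurs when an occurrence of the underlying classical pattern has every box in $R$ empty and the entries lying in the union of the boxes of $D$, read left to right, form a decreasing sequence (avoid $12$). A mesh pattern $(p,R)$ has no decorated region. *)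

(* Defs.v *)
From mathcomp Require Import all_boot.
Set Implicit Arguments. Unset Strict Implicit. Unset Printing Implicit Defensive.

Definition is_perm (s : seq nat) : bool := perm_eq s (iota 1 (size s)).

Definition val_at (s : seq nat) (x : nat) : nat := nth 0 s x.-1.

(* Stack-sort: S(eps)=eps, S(alpha m beta) = S(alpha) S(beta) m, m the maximum.
   Fuel = size w is enough since the recursive calls are on strictly shorter words. *)
Fixpoint ss_fuel (f : nat) (w : seq nat) : seq nat :=
  match f with
  | 0 => [::]
  | f'.+1 =>
    match w with
    | [::] => [::]
    | _ => let m := foldr maxn 0 w in
           let i := index m w in
           ss_fuel f' (take i w) ++ ss_fuel f' (drop i.+1 w) ++ [:: m]
    end
  end.
Definition stack_sort (w : seq nat) : seq nat := ss_fuel (size w) w.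

Record dpattern := DPat {
  dp_pat : seq nat;
  dp_shade : seq (nat * nat);
  dp_deco : seq (nat * nat)      (* boxes whose union is the decorated region *)
}.

Section Occ.
Variables (s p : seq nat) (q : seq nat).
(* q = list of 1-based positions i_1 < ... < i_k of the occurrence *)
Let n := size s.
Let k := size p.

Definition classical_occ : bool :=
  [&& size q == k, sorted ltn q, all (fun x => 0 < x <= n) q &
   all (fun a => all (fun b =>
      (val_at s (nth 0 q a) < val_at s (nth 0 q b)) ==
      (nth 0 p a < nth 0 p b)) (iota 0 k)) (iota 0 k)].

Definition iext (a : nat) : nat :=
  if a == 0 then 0 else if a == k.+1 then n.+1 else nth 0 q a.-1.
Definition vext (b : nat) : nat :=
  if b == 0 then 0 else if b == k.+1 then n.+1
  else nth 0 (sort leq (map (val_at s) q)) b.-1.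

Definition in_box (ab : nat * nat) (x : nat) : bool :=
  [&& iext ab.1 < x < iext ab.1.+1 & vext ab.2 < val_at s x < vext ab.2.+1].

Definition box_positions (ab : nat * nat) : seq nat :=
  [seq x <- iota 1 n | in_box ab x].
End Occ.

Definition occurs_at (s : seq nat) (P : dpattern) (q : seq nat) : bool :=
  [&& classical_occ s (dp_pat P) q,
      all (fun ab => nilp (box_positions s (dp_pat P) q ab)) (dp_shade P) &
      sorted gtn [seq val_at s x | x <- iota 1 (size s)
                  & has (fun ab => in_box s (dp_pat P) q ab x) (dp_deco P)]].

Definition j2 : dpattern := DPat [:: 3; 4; 2; 5; 1] [:: (2,4); (2,5)] [::].
Definition W2 : dpattern := DPat [:: 3; 2; 4; 1] [:: (1,4)] [::].

(* A pattern with circled entries: circled given by their 1-based positions. *)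
Record cpattern := CPat { cp_dp : dpattern; cp_circled : seq nat }.

Definition uncircled (C : cpattern) (q : seq nat) : seq nat :=
  [seq nth 0 q i.-1 | i <- iota 1 (size q) & i \notin cp_circled C].

Definition sh3 : seq (nat*nat) :=
  [:: (1,5); (1,6); (1,7); (1,8);
      (2,3); (2,4); (2,5); (2,6); (2,7); (2,8);
      (3,5); (3,6); (3,7); (3,8); (4,6); (4,7); (4,8);
      (5,5); (5,6); (5,7); (5,8)].
Definition sh6 : seq (nat*nat) :=
  [:: (1,5); (1,6); (1,7); (1,8);
      (2,3); (2,4); (2,5); (2,6); (2,7); (2,8);
      (3,5); (3,6); (3,7); (3,8); (4,7); (4,8);
      (5,5); (5,6); (5,7); (5,8)].
Definition sh8 : seq (nat*nat) :=
  [:: (1,4); (1,5); (1,6); (1,7);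
      (2,3); (2,4); (2,5); (2,6); (2,7);
      (3,5); (3,6); (3,7); (4,4); (4,5); (4,6); (4,7)].
Definition sh11 : seq (nat*nat) :=
  [:: (1,4); (1,5); (1,6); (1,7);
      (2,3); (2,4); (2,5); (2,6); (2,7);
      (3,6); (3,7); (4,4); (4,5); (4,6); (4,7)].

Definition J2_1 := CPat (DPat [:: 3;4;5;2;6;1]
  [:: (1,3);(1,4);(1,5);(1,6);(2,5);(2,6);(3,5);(3,6)] [::]) [:: 2].
Definition J2_2 := CPat (DPat [:: 3;4;6;5;2;7;1]
  [:: (0,5);(1,3);(1,4);(1,5);(1,6);(1,7);(2,5);(2,6);(2,7);(3,6);(3,7);
      (4,5);(4,6);(4,7)] [:: (3,5)]) [:: 2; 3].
Definition J2_3 := CPat (DPat [:: 7;3;4;6;5;2;8;1] sh3 [:: (4,5)]) [:: 1; 3; 4].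
Definition J2_4 := CPat (DPat [:: 8;3;4;6;5;2;7;1] sh3 [:: (4,5)]) [:: 1; 3; 4].
Definition J2_5 := CPat (DPat [:: 3;4;7;5;2;6;1]
  [:: (0,5);(0,6);(1,3);(1,4);(1,5);(1,6);(1,7);(2,5);(2,6);(2,7);(3,7);
      (4,5);(4,6);(4,7)] [:: (3,5);(3,6)]) [:: 2; 3].
Definition J2_6 := CPat (DPat [:: 8;3;4;7;5;2;6;1] sh6 [:: (4,5);(4,6)]) [:: 1; 3; 4].
Definition J2_7 := CPat (DPat [:: 3;5;4;2;6;1]
  [:: (0,4);(1,3);(1,4);(1,5);(1,6);(2,5);(2,6);(3,4);(3,5);(3,6)]
  [:: (2,4)]) [:: 2].
Definition J2_8 := CPat (DPat [:: 6;3;5;4;2;7;1] sh8 [:: (3,4)]) [:: 1; 3].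
Definition J2_9 := CPat (DPat [:: 7;3;5;4;2;6;1] sh8 [:: (3,4)]) [:: 1; 3].
Definition J2_10 := CPat (DPat [:: 3;6;4;2;5;1]
  [:: (0,4);(0,5);(1,3);(1,4);(1,5);(1,6);(2,6);(3,4);(3,5);(3,6)]
  [:: (2,4);(2,5)]) [:: 2].
Definition J2_11 := CPat (DPat [:: 7;3;6;4;2;5;1] sh11 [:: (3,4);(3,5)]) [:: 1; 3].
Definition J2_12 := CPat (DPat [:: 3;4;2;5;1]
  [:: (1,3);(1,4);(1,5);(2,4);(2,5)] [::]) [::].

Definition J2_list : seq cpattern :=
  [:: J2_1; J2_2; J2_3; J2_4; J2_5; J2_6; J2_7; J2_8; J2_9; J2_10; J2_11; J2_12].

(* Main.v *)
Require Import Defs.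
From Stdlib Require Import List.
From mathcomp Require Import all_boot.
From mathcomp Require Import zify.
Set Implicit Arguments. Unset Strict Implicit. Unset Printing Implicit Defensive.


Definition ord_spec (w s : seq nat) := forall i j, i < j < size w ->
  (index (nth 0 w j) s < index (nth 0 w i) s <->
   (nth 0 w j < nth 0 w i /\ forall k, i < k < j -> nth 0 w k < nth 0 w i)).

Lemma ss_fuel_S f w : w != [::] -> ss_fuel f.+1 w =
  ss_fuel f (take (index (foldr maxn 0 w) w) w) ++
  ss_fuel f (drop (index (foldr maxn 0 w) w).+1 w) ++ [:: foldr maxn 0 w].
Proof. by case: w. Qed.

Lemma maxf_ge w y : y \in w -> y <= foldr maxn 0 w.
Proof.
elim: w => //= x w IH; rewrite inE => /orP [/eqP->|/IH]; lia.
Qed.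

Lemma maxf_mem w : w != [::] -> foldr maxn 0 w \in w.
Proof.
elim: w => //= x w IH _; rewrite inE.
case: w IH => [|y w] IH /=; first by rewrite maxn0 eqxx.
have := IH isT; rewrite /maxn; case: ltnP => _ h; first by rewrite h orbT.
by rewrite eqxx.
Qed.

Lemma idx_a (a b Sa Sb : seq nat) m u : perm_eq Sa a -> u \in a ->
  index u (Sa ++ Sb ++ [:: m]) = index u Sa /\ index u Sa < size a.
Proof.
move=> pa ua; have ua' : u \in Sa by rewrite (perm_mem pa).
by rewrite index_cat ua'; split => //; rewrite -(perm_size pa) index_mem.
Qed.

Lemma idx_b (a b Sa Sb : seq nat) m u : perm_eq Sa a -> perm_eq Sb b -> u \in b -> u \notin a ->
  index u (Sa ++ Sb ++ [:: m]) = size a + index u Sb /\ index u Sb < size b.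
Proof.
move=> pa pb ub ua; have ub' : u \in Sb by rewrite (perm_mem pb).
have ua' : u \notin Sa by rewrite (perm_mem pa).
rewrite index_cat (negbTE ua') index_cat ub' -(perm_size pa); split => //; by rewrite -(perm_size pb) index_mem.
Qed.

Lemma idx_m (a b Sa Sb : seq nat) m : perm_eq Sa a -> perm_eq Sb b -> m \notin b -> m \notin a ->
  index m (Sa ++ Sb ++ [:: m]) = size a + size b.
Proof.
move=> pa pb ub ua; have ub' : m \notin Sb by rewrite (perm_mem pb).
have ua' : m \notin Sa by rewrite (perm_mem pa).
by rewrite index_cat (negbTE ua') index_cat (negbTE ub') /= eqxx addn0 -(perm_size pa) -(perm_size pb).
Qed.

Lemma ss_step (a b Sa Sb : seq nat) m :
  uniq (a ++ m :: b) -> (forall y, y \in a ++ m :: b -> y <= m) ->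
  perm_eq Sa a -> perm_eq Sb b -> ord_spec a Sa -> ord_spec b Sb ->
  perm_eq (Sa ++ Sb ++ [:: m]) (a ++ m :: b) /\ ord_spec (a ++ m :: b) (Sa ++ Sb ++ [:: m]).
Proof.
move=> U Hm pa pb oa ob; split.
  have -> : m :: b = [:: m] ++ b by [].
  apply: perm_cat => //; rewrite perm_catC; exact: perm_cat.
have Ua : uniq a by move: U; rewrite cat_uniq => /and3P[].
have Ub : uniq b by move: U; rewrite cat_uniq /= => /and3P[_ _ /andP[]].
have mb : m \notin b by move: U; rewrite cat_uniq /= => /and3P[_ _ /andP[]].
have ma : m \notin a by move: U; rewrite cat_uniq /= => /and3P[_ /norP[]].
have dab : forall u, u \in b -> u \notin a.
  move=> u ub; apply/negP => ua; move: U; rewrite cat_uniq => /and3P[_ /hasP].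
  by case; exists u => //; rewrite inE ub orbT.
have nth_in_a : forall k, k < size a -> nth 0 (a ++ m :: b) k \in a.
  by move=> k hk; rewrite nth_cat hk mem_nth.
have nth_in_b : forall k, size a < k < (size a + (size b).+1) -> nth 0 (a ++ m :: b) k \in b.
  move=> k hk; rewrite nth_cat ltnNge (ltnW (proj1 (andP hk))) /=.
  have -> : k - size a = (k - size a).-1.+1 by lia.
  rewrite /= mem_nth //; move: hk; set sa := size a; set sb := size b; lia.
have nth_m : nth 0 (a ++ m :: b) (size a) = m by rewrite nth_cat ltnn subnn.
have Hle : forall k, k < size (a ++ m :: b) -> nth 0 (a ++ m :: b) k <= m.
  by move=> k hk; apply: Hm; rewrite mem_nth.
have Hneq : forall k, k < size (a ++ m :: b) -> k != size a -> nth 0 (a ++ m :: b) k < m.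
  move=> k hk hne; have := Hle k hk; rewrite leq_eqVlt => /orP[/eqP e|//].
  have hs : size a < size (a ++ m :: b) by rewrite size_cat /=; lia.
  by move: (nth_uniq 0 hk hs U); rewrite e nth_m eqxx (negbTE hne).
move=> i j /andP [hij hj]; rewrite size_cat /= in hj.
case: (ltngtP j (size a)) => hja.
-
  have hia : i < size a by lia.
  rewrite !nth_cat hja hia.
  have [-> _] := idx_a b Sb m pa (mem_nth 0 hja).
  have [-> _] := idx_a b Sb m pa (mem_nth 0 hia).
  rewrite (oa i j); last by lia.
  split => [] [h1 h2]; split => // k hk; have := h2 k hk; rewrite nth_cat ifT //; lia.
-
  have jb := nth_in_b j (ltac:(lia)).
  have [-> _] := idx_b m pa pb jb (dab _ jb).
  case: (ltngtP i (size a)) => hia.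
  + have ia := nth_in_a i hia.
    have [-> h] := idx_a b Sb m pa ia.
    split => [|[_ h2]]; first lia.
    have := h2 (size a) (ltac:(lia)); rewrite nth_m.
    have := Hle i (ltac:(rewrite size_cat /=; lia)); lia.
  +
    have ib := nth_in_b i (ltac:(lia)).
    have [-> _] := idx_b m pa pb ib (dab _ ib).
    rewrite ltn_add2l.
    have ei : forall k, size a < k -> nth 0 (a ++ m :: b) k = nth 0 b (k - (size a).+1).
      move=> k hk; rewrite nth_cat ltnNge (ltnW hk) /=.
      have -> : k - size a = (k - (size a).+1).+1 by lia. by [].
    rewrite (ei j) // (ei i) //.
    rewrite (ob (i - (size a).+1) (j - (size a).+1)); last lia.
    split => [] [h1 h2]; split => // k hk.
    * rewrite ei; last lia. apply: h2; lia.
    * have := h2 (k + (size a).+1) (ltac:(lia)). rewrite ei; last lia.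
      by have -> : k + (size a).+1 - (size a).+1 = k by lia.
  +
    subst i; rewrite nth_m (idx_m pa pb mb ma).
    have [_ h] := idx_b m pa pb jb (dab _ jb).
    split => [_|]; last lia.
    split.
      apply: Hneq; rewrite ?size_cat /=; lia.
    move=> k hk; apply: Hneq; rewrite ?size_cat /=; lia.
-
  subst j; rewrite nth_m (idx_m pa pb mb ma).
  have ia := nth_in_a i hij.
  have [-> h] := idx_a b Sb m pa ia.
  split => [|[h1 _]]; first lia.
  have := Hle i (ltac:(rewrite size_cat /=; lia)); lia.
Qed.

Lemma ss_spec f w : size w <= f -> uniq w ->
  perm_eq (ss_fuel f w) w /\ ord_spec w (ss_fuel f w).
Proof.
elim: f w => [|f IH] w.
  rewrite leqn0 => /nilP -> _; split => // i j; by rewrite /= ltn0 andbF.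
move=> hs hu; case: (altP (w =P [::])) => [->|hne]; first by split => // i j; rewrite /= ltn0 andbF.
rewrite ss_fuel_S //.
set m := foldr maxn 0 w; set im := index m w.
have hm : m \in w by exact: maxf_mem.
have him : im < size w by rewrite index_mem.
have dec : w = take im w ++ m :: drop im.+1 w.
  by rewrite -{1}(cat_take_drop im w) (drop_nth 0 him) nth_index.
have hu' := hu; rewrite dec in hu'.
have [pa oa] : perm_eq (ss_fuel f (take im w)) (take im w) /\ ord_spec (take im w) (ss_fuel f (take im w)).
  apply: IH; first by rewrite size_take him; lia.
  by move: hu'; rewrite cat_uniq => /and3P[].
have [pb ob] : perm_eq (ss_fuel f (drop im.+1 w)) (drop im.+1 w) /\ ord_spec (drop im.+1 w) (ss_fuel f (drop im.+1 w)).
  apply: IH; first by rewrite size_drop; lia.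
  by move: hu'; rewrite cat_uniq /= => /and3P[_ _ /andP[]].
have := ss_step hu' _ pa pb oa ob; rewrite -dec; apply.
by move=> y hy; apply: maxf_ge.
Qed.

Lemma stack_sort_spec w : uniq w -> perm_eq (stack_sort w) w /\ ord_spec w (stack_sort w).
Proof. by move=> hu; apply: ss_spec. Qed.


Lemma nilp_filter_iota (P : pred nat) n :
  nilp [seq x <- iota 1 n | P x] <-> (forall x, 0 < x <= n -> ~~ P x).
Proof.
split.
  move=> /nilP h x hx; apply/negP => px.
  have : x \in [seq x <- iota 1 n | P x] by rewrite mem_filter px mem_iota; lia.
  by rewrite h.
move=> h; apply/nilP/eqP; rewrite -[_ == _]negbK -has_filter; apply/hasP => [[x]].
rewrite mem_iota => hx; have := h x; rewrite (negbTE (h x _)) //; lia.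
Qed.

Lemma pairwise_filter_iota (r : rel nat) (P : pred nat) m : forall a,
  pairwise r [seq x <- iota a m | P x] <->
  (forall x y, a <= x -> x < y -> y < a + m -> P x -> P y -> r x y).
Proof.
elim: m => [|m IH] a.
  by split => // _ x y; lia.
rewrite /= ; case: ifP => pa.
  rewrite /=; split.
    move=> /andP [/allP h1 /IH h2] x y hax hxy hy px py.
    case: (ltngtP a x) => hx.
    - apply: h2 => //; lia.
    - lia.
    - subst x; apply: h1; rewrite mem_filter py mem_iota; lia.
  move=> h; apply/andP; split.
    apply/allP => y; rewrite mem_filter mem_iota => /andP [py hy]; apply: h => //; lia.
  apply/IH => x y hax hxy hy px py; apply: h => //; lia.
rewrite IH; split.
  move=> h x y hax hxy hy px py; case: (ltngtP a x) => hx.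
  - apply: h => //; lia.
  - lia.
  - by subst x; rewrite pa in px.
move=> h x y hax hxy hy px py; apply: h => //; lia.
Qed.

Lemma sorted_gtn_iff (F : nat -> nat) (P : pred nat) n :
  sorted gtn [seq F x | x <- iota 1 n & P x] <->
  (forall x y, 0 < x -> x < y -> y <= n -> P x -> P y -> F y < F x).
Proof.
have tr : transitive gtn by move=> a b c /= h1 h2; lia.
rewrite (sorted_pairwise tr) pairwise_map pairwise_filter_iota.
split => h x y *; apply: h => //; lia.
Qed.

Lemma sort_vals (l p : seq nat) :
  perm_eq [seq index j p | j <- iota 1 (size l)] (iota 0 (size l)) ->
  sorted ltn [seq nth 0 l (index j p) | j <- iota 1 (size l)] ->
  sort leq l = [seq nth 0 l (index j p) | j <- iota 1 (size l)].
Proof.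
move=> hp hs.
have -> : [seq nth 0 l (index j p) | j <- iota 1 (size l)] =
          [seq nth 0 l i | i <- [seq index j p | j <- iota 1 (size l)]] by rewrite -map_comp.
have hl : l = [seq nth 0 l i | i <- iota 0 (size l)] by rewrite -{1}(mkseq_nth 0 l).
have hs' : sorted leq [seq nth 0 l i | i <- [seq index j p | j <- iota 1 (size l)]].
  rewrite -map_comp; apply: sub_sorted hs => a b; exact: ltnW.
rewrite -(sorted_sort leq_trans hs').
apply/perm_sortP; [exact: leq_total|exact: leq_trans|exact: anti_leq|].
by rewrite {1}hl perm_sym; apply: perm_map.
Qed.

Lemma shade_iff s p q (sh : seq (nat * nat)) :
  all (fun ab => nilp (box_positions s p q ab)) sh <->
  (forall ab, ab \in sh -> forall x, 0 < x <= size s -> ~~ in_box s p q ab x).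
Proof.
split.
  move=> /allP h ab hab; move: (h ab hab); rewrite /box_positions nilp_filter_iota; exact.
move=> h; apply/allP => ab hab; rewrite /box_positions nilp_filter_iota; exact: h.
Qed.

Lemma sub_shade s p q sh bs : all (fun ab => nilp (box_positions s p q ab)) sh ->
  all (mem sh) bs -> forall x, 0 < x <= size s -> all (fun ab => ~~ in_box s p q ab x) bs.
Proof.
move=> /shade_iff h /allP hb x hx; apply/allP => ab hab; exact: h (hb _ hab) x hx.
Qed.


Lemma perm_uniq pi : is_perm pi -> uniq pi.
Proof. by move=> h; rewrite (perm_uniq h) iota_uniq. Qed.

Lemma perm_mem_iff pi v : is_perm pi -> (v \in pi) = (0 < v <= size pi).
Proof. by move=> h; rewrite (perm_mem h) mem_iota; apply/idP/idP; lia. Qed.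

Lemma val_range pi x : is_perm pi -> 0 < x <= size pi -> 0 < val_at pi x <= size pi.
Proof.
move=> h hx; rewrite -perm_mem_iff //; apply: mem_nth; move: hx; set k := size pi; lia.
Qed.

Lemma val_inj pi x y : is_perm pi -> 0 < x <= size pi -> 0 < y <= size pi ->
  val_at pi x = val_at pi y -> x = y.
Proof.
move=> h hx hy e; have := nth_uniq 0 (_ : x.-1 < size pi) (_ : y.-1 < size pi) (perm_uniq h).
rewrite /val_at in e; rewrite e eqxx => /(_ ltac:(lia) ltac:(lia)) /eqP; lia.
Qed.

Lemma val_surj pi v : is_perm pi -> 0 < v <= size pi ->
  exists x, 0 < x <= size pi /\ val_at pi x = v.
Proof.
move=> h hv; rewrite -perm_mem_iff // in hv.
exists (index v pi).+1; rewrite /val_at /= nth_index //; split => //.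
have := index_mem v pi; rewrite hv; set k := size pi; set k2 := index v pi; lia.
Qed.

Lemma val_index pi v : v \in pi -> val_at pi (index v pi).+1 = v.
Proof. by move=> h; rewrite /val_at /= nth_index. Qed.

Lemma index_val pi x : uniq pi -> 0 < x <= size pi -> index (val_at pi x) pi = x.-1.
Proof. move=> u hx; rewrite /val_at index_uniq //; lia. Qed.

Lemma ex_or_all (P : pred nat) a b :
  (forall t, a < t < b -> P t) \/ exists t, a < t < b /\ ~~ P t.
Proof.
case: (boolP (all P (iota a.+1 (b - a.+1)))) => h.
  left => t ht; move/allP: h; apply; rewrite mem_iota; lia.
right; move: h; rewrite -has_predC => /hasP [t]; rewrite mem_iota => ht pt.
exists t; split => //; lia.
Qed.

Lemma inj_list pi (q : seq nat) t : is_perm pi -> 0 < t <= size pi ->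
  all (fun x => 0 < x <= size pi) q -> t \notin q ->
  all (fun v => val_at pi t != v) (map (val_at pi) q).
Proof.
move=> h ht /allP hq hn; apply/allP => v /mapP [x hx ->]; apply/eqP => e.
have := val_inj h ht (hq x hx) e => ex; by rewrite ex hx in hn.
Qed.


Lemma bef_spec pi x y : is_perm pi -> 0 < x -> x < y -> y <= size pi ->
  (index (val_at pi y) (stack_sort pi) < index (val_at pi x) (stack_sort pi) <->
   val_at pi y < val_at pi x /\ forall t, x < t < y -> val_at pi t < val_at pi x).
Proof.
move=> h hx hxy hy; have [_ os] := stack_sort_spec (perm_uniq h).
have := os x.-1 y.-1; rewrite /val_at => ->; last by move: hy; set k := size pi; lia.
have ey : y.-1.+1 = y by lia. have ex : x.-1.+1 = x by lia.
split => [] [h1 h2]; split => // t ht.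
  have := h2 t.-1; rewrite (_ : t.-1.+1 = t) ?ltnS //; last lia. apply; lia.
have := h2 t.+1; rewrite /=; apply; lia.
Qed.

Lemma idx_neq pi u v : is_perm pi -> u \in pi -> v \in pi -> u != v ->
  index u (stack_sort pi) != index v (stack_sort pi).
Proof.
move=> h hu hv; have [p _] := stack_sort_spec (perm_uniq h).
rewrite -(perm_mem p) in hu; rewrite -(perm_mem p) in hv.
apply: contra => /eqP e; by rewrite -(nth_index 0 hu) e nth_index.
Qed.

Lemma idx_lt pi x y : is_perm pi -> 0 < x <= size pi -> 0 < y <= size pi -> x != y ->
  ~ (index (val_at pi y) (stack_sort pi) < index (val_at pi x) (stack_sort pi)) ->
  index (val_at pi x) (stack_sort pi) < index (val_at pi y) (stack_sort pi).
Proof.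
move=> h hx hy hne hn.
have := idx_neq h (_ : val_at pi x \in pi) (_ : val_at pi y \in pi).
rewrite !perm_mem_iff ?val_range // => /(_ isT isT).
have : val_at pi x != val_at pi y by apply: contra hne => /eqP /(val_inj h hx hy) ->.
move=> ne /(_ ne); lia.
Qed.

Section Main.
Variable pi : seq nat.
Hypothesis Hp : is_perm pi.
Local Notation f := (val_at pi).
Local Notation T := (stack_sort pi).
Local Notation n := (size pi).
Variables i1 i2 i3 i4 i5 : nat.
Hypothesis H1 : 0 < i1.
Hypothesis H12 : i1 < i2.
Hypothesis H23 : i2 < i3.
Hypothesis H34 : i3 < i4.
Hypothesis H45 : i4 < i5.
Hypothesis H5n : i5 <= n.
Hypothesis Ha : f i5 < f i3.
Hypothesis Hb : f i3 < f i1.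
Hypothesis Hc : f i1 < f i2.
Hypothesis Hd : f i2 < f i4.
Hypothesis Hj : forall t, i2 < t < i3 -> f t < f i2.

Lemma bef x y : 0 < x -> x < y -> y <= n ->
  (index (f y) T < index (f x) T <-> f y < f x /\ forall t, x < t < y -> f t < f x).
Proof. exact: bef_spec. Qed.
Arguments bef : clear implicits.

Definition Viol : Prop :=
  (exists p r, i1 < p < r /\ r < i2 /\ f i2 < f p < f r) \/
  (exists p r, 0 < p < i1 /\ i1 < r < i2 /\ f i2 < f p < f r /\
      forall t, p < t < i1 -> f t < f p).

Lemma inj' x y : 0 < x <= n -> 0 < y <= n -> f x = f y -> x = y.
Proof. exact: val_inj. Qed.

Lemma viol_between : Viol <-> exists x, 0 < x <= n /\ f i2 < f x /\
   index (f i1) T < index (f x) T < index (f i3) T.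
Proof.
split.
  case => [[p [r [hp [hr hv]]]] | [p [r [hp [hr [hv hall]]]]]]; exists p;
   (split; first lia); (split; first lia); apply/andP; split.
  - apply: idx_lt => //; try lia.
    by move/(bef i1 p) => /(_ ltac:(lia) ltac:(lia)); lia.
  - apply: idx_lt => //; try lia.
    move/(bef p i3) => /(_ ltac:(lia) ltac:(lia) ltac:(lia)).
    case=> _ h; have := h r; lia.
  - have := bef p i1 ltac:(lia) ltac:(lia) ltac:(lia).
    case=> _ h; apply: h; split => //; lia.
  - apply: idx_lt => //; try lia.
    move/(bef p i3) => /(_ ltac:(lia) ltac:(lia) ltac:(lia)).
    case=> _ h; have := h r; lia.
case=> x [hx [hfx /andP [h1 h3]]].
case: (ltngtP x i1) => hx1.
-
  have [_ hall] := (bef x i1 ltac:(lia) ltac:(lia) ltac:(lia)).1 h1.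
  case: (ex_or_all (fun t => f t < f x) x i3) => [hall3|[t [ht hnt]]].
    have := (bef x i3 ltac:(lia) ltac:(lia) ltac:(lia)).2.
    have hh : f i3 < f x by lia.
    move=> /(_ (conj hh hall3)); lia.
  have hxt : f x <> f t by move=> e; have := inj' (_ : 0 < x <= n) (_ : 0 < t <= n) e; lia.
  right; exists x, t; split; first lia.
  have ht1 : i1 < t.
    case: (ltngtP t i1) => h; [have := hall t; lia | lia | subst t; lia].
  have ht2 : t < i2.
    case: (ltngtP t i2) => h; [lia | have := @Hj t; lia | subst t; lia].
  split; first lia. split; first lia. exact: hall.
-
  case: (ltngtP x i3) => hx3.
  + have hx2 : x < i2.
      case: (ltngtP x i2) => h; [lia | have := @Hj x; lia | subst x; lia].
    case: (ex_or_all (fun t => f t < f x) x i3) => [hall3|[t [ht hnt]]].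
      have := (bef x i3 ltac:(lia) ltac:(lia) ltac:(lia)).2.
      have hh : f i3 < f x by lia.
    move=> /(_ (conj hh hall3)); lia.
    have hxt : f x <> f t by move=> e; have := inj' (_ : 0 < x <= n) (_ : 0 < t <= n) e; lia.
    have ht2 : t < i2.
      case: (ltngtP t i2) => h; [lia | have := @Hj t; lia | subst t; lia].
    left; exists x, t; lia.
  + have := (bef i3 x ltac:(lia) ltac:(lia) ltac:(lia)).1 h3; lia.
  + subst x; lia.
- subst x; lia.
Qed.

Lemma sizeT : size T = n.
Proof. by have [p _] := stack_sort_spec (perm_uniq Hp); rewrite (perm_size p). Qed.

Lemma permT : is_perm T.
Proof.
have [p _] := stack_sort_spec (perm_uniq Hp).
by rewrite /is_perm sizeT; apply: perm_trans p _.
Qed.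

Lemma memT v : (v \in T) = (0 < v <= n).
Proof. by rewrite perm_mem_iff ?permT // sizeT. Qed.

Lemma lhs_iff :
  (exists q : seq nat,
      occurs_at T W2 q /\
      (forall r, 1 <= r <= 4 ->
         val_at T (nth 0 q (index r (dp_pat W2))) =
         f (nth 0 [:: i1; i2; i3; i4; i5] (index r (dp_pat j2))))) <-> ~ Viol.
Proof.
have uT := perm_uniq permT.
have fr : forall x, 0 < x <= n -> 0 < f x <= n by move=> x; exact: val_range.
split.
  case=> q [Hocc Hv] /viol_between [x [hx [hfx /andP [h1 h3]]]].
  move: Hocc; rewrite /occurs_at /classical_occ => /and3P [/and4P [/eqP sq hs hr hcl] hsh _].
  case: q sq hs hr hcl hsh Hv => [|q1 [|q2 [|q3 [|q4 [|]]]]] //= _ hs hr hcl hsh Hv.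
  have e1 := Hv 3 isT; have e2 := Hv 2 isT; have e3 := Hv 4 isT; have e4 := Hv 1 isT.
  rewrite /= in e1 e2 e3 e4.
  rewrite sizeT in hr.
  have ix1 : index (f i1) T = q1.-1 by rewrite -e1 index_val // sizeT; lia.
  have ix3 : index (f i3) T = q2.-1 by rewrite -e2 index_val // sizeT; lia.
  have hsort : sort leq (map (val_at T) [:: q1; q2; q3; q4]) = [:: f i5; f i3; f i1; f i2].
    rewrite (sort_vals (p := [:: 3; 2; 4; 1])) //= ?e1 ?e2 ?e3 ?e4 //; lia.
  move: hsh; rewrite andbT /box_positions nilp_filter_iota sizeT => /(_ (index (f x) T).+1).
  have fxT : f x \in T by rewrite memT fr.
  have hxn : (index (f x) T).+1 <= n by rewrite -sizeT; have := index_mem (f x) T; rewrite fxT.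
  rewrite /in_box /iext /vext hsort /= val_index // => /(_ ltac:(lia)).
  rewrite sizeT; have := fr x hx; move: ix1 ix3 h1 h3 hr; set I1 := index (f i1) T; set I3 := index (f i3) T; set IX := index (f x) T; lia.
move=> nV.
have m1 : f i1 \in T by rewrite memT fr //; lia.
have m2 : f i2 \in T by rewrite memT fr //; lia.
have m3 : f i3 \in T by rewrite memT fr //; lia.
have m5 : f i5 \in T by rewrite memT fr //; lia.
have b13 : index (f i1) T < index (f i3) T.
  apply: idx_lt => //; try lia.
  move/(bef i1 i3) => /(_ ltac:(lia) ltac:(lia) ltac:(lia)) [_ h]; have := h i2; lia.
have b32 : index (f i3) T < index (f i2) T.
  have := (bef i2 i3 ltac:(lia) ltac:(lia) ltac:(lia)).2; apply; split; [lia | move=> t ht; exact: Hj].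
have b25 : index (f i2) T < index (f i5) T.
  apply: idx_lt => //; try lia.
  move/(bef i2 i5) => /(_ ltac:(lia) ltac:(lia) ltac:(lia)) [_ h]; have := h i4; lia.
have hI : forall v, v \in T -> (index v T).+1 <= n.
  by move=> v hv; rewrite -sizeT; have := index_mem v T; rewrite hv.
have hI5 := hI _ m5.
exists ([:: (index (f i1) T).+1; (index (f i3) T).+1; (index (f i2) T).+1; (index (f i5) T).+1]).
split; last first.
  move=> r hr; case: r hr => [|[|[|[|[|r]]]]] //= _; rewrite val_index //.
have hsort : sort leq (map (val_at T) [:: (index (f i1) T).+1; (index (f i3) T).+1; (index (f i2) T).+1; (index (f i5) T).+1]) = [:: f i5; f i3; f i1; f i2].
  rewrite (sort_vals (p := [:: 3; 2; 4; 1])) //= ?val_index //; lia.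
rewrite /occurs_at /classical_occ /= !val_index //.
apply/and3P; split.
- rewrite sizeT; lia.
- rewrite andbT /box_positions nilp_filter_iota sizeT => y hy.
  rewrite /in_box /iext /vext hsort /=; apply/negP => /andP [hy1 hy2].
  apply: nV; apply/viol_between.
  have hv : 0 < val_at T y <= n by rewrite -sizeT; apply: val_range permT _; rewrite sizeT.
  have [x [hx ex]] := val_surj Hp hv.
  exists x; rewrite ex; split => //; split; first lia.
  have := index_val uT (x := y); rewrite sizeT => /(_ hy) ->; lia.
- by apply/sorted_gtn_iff.
Qed.

Lemma B12 q : occurs_at pi (cp_dp J2_12) q -> uncircled J2_12 q = [:: i1; i2; i3; i4; i5] -> ~ Viol.
Proof.
rewrite /occurs_at => /and3P [/and4P [/eqP sq hs hr hcl] Hsh _].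
case: q sq hs hr hcl Hsh => [|p1 [|p2 [|p3 [|p4 [|p5 [|]]]]]] // _ hs hr hcl Hsh.
have hr' := hr; rewrite /= in hs hr' hcl.
rewrite /uncircled /= => [[e1 e2 e3 e4 e5]]; subst.
have Hsort : sort leq (map f [:: i1;i2;i3;i4;i5]) = [:: f i5; f i3; f i1; f i2; f i4].
  by rewrite (sort_vals (p := [:: 3;4;2;5;1])) //=; lia.
have S1 : forall t, i1 < t < i2 -> f t < f i1.
  move=> t ht; have tn : 0 < t <= n by lia.
  have := sub_shade Hsh (bs := [:: (1,3); (1,4); (1,5)]) isT tn.
  have := inj_list Hp tn hr ltac:(rewrite !inE; lia).
  have := val_range Hp tn; rewrite /in_box /iext /vext Hsort /= ht /=; lia.
move=> [[p [r ?]]|[p [r ?]]]; have := S1 r; lia.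
Qed.

Ltac killbox t :=
  first [ lia | match goal with H : forall u : nat, _ |- _ => have := H t; lia end ].
Ltac killdeco t t' :=
  match goal with H : forall u u' : nat, _ |- _ => have := H t t'; lia end.
Ltac build_occ Hs :=
  rewrite /occurs_at; apply/and3P; split;
  [ rewrite /classical_occ /=; lia
  | rewrite /=; repeat (apply/andP; split);
    match goal with
    | |- is_true true => done
    | _ => let t := fresh "t" in let ht := fresh "ht" in
           rewrite /box_positions nilp_filter_iota; intros t ht;
           rewrite /in_box /iext /vext Hs /=; apply/negP => /andP [? ?];
           have := val_range Hp ht; killbox t
    end
  | let t := fresh "t" in let t' := fresh "t'" in
    apply/sorted_gtn_iff; intros t t' ? ? ?; rewrite /in_box /iext /vext ?Hs /=;
    first [ by [] | killdeco t t' ] ].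

Lemma A12 : (forall t, i1 < t < i2 -> f t < f i1) ->
  occurs_at pi (cp_dp J2_12) [:: i1; i2; i3; i4; i5].
Proof.
move=> S1.
have Hs : sort leq (map f [:: i1;i2;i3;i4;i5]) = [:: f i5; f i3; f i1; f i2; f i4].
  by rewrite (sort_vals (p := [:: 3;4;2;5;1])) //=; lia.
build_occ Hs.
Qed.

Lemma A1 x : i1 < x < i2 -> f i1 < f x < f i2 ->
  (forall t, i1 < t < x -> f t < f i1) -> (forall t, x < t < i2 -> f t < f i2) ->
  occurs_at pi (cp_dp J2_1) [:: i1; x; i2; i3; i4; i5].
Proof.
move=> hx hfx S1 S2.
have Hs : sort leq (map f [:: i1;x;i2;i3;i4;i5]) = [:: f i5; f i3; f i1; f x; f i2; f i4].
  by rewrite (sort_vals (p := [:: 3;4;5;2;6;1])) //=; lia.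
build_occ Hs.
Qed.

Lemma A7 y : i1 < y < i2 -> f i2 < f y -> f y < f i4 -> (forall t, i1 < t < y -> f t < f i1) -> (forall t, y < t < i2 -> f t < f y) -> (forall t t', y < t -> t < t' -> t' < i2 -> f i2 < f t -> f i2 < f t' -> f t' < f t) -> (forall t, 0 < t < i1 -> f t < f i2) ->
  occurs_at pi (cp_dp J2_7) [:: i1; y; i2; i3; i4; i5].
Proof.
move=> h1 h2 h3 S1 S2 SD SL.
have Hs : sort leq (map f [:: i1; y; i2; i3; i4; i5]) = [:: f i5; f i3; f i1; f i2; f y; f i4].
  by rewrite (sort_vals (p := [:: 3;5;4;2;6;1])) //=; lia.
build_occ Hs.
Qed.

Lemma A10 y : i1 < y < i2 -> f i2 < f y -> f i4 < f y -> (forall t, i1 < t < y -> f t < f i1) -> (forall t, y < t < i2 -> f t < f y) -> (forall t t', y < t -> t < t' -> t' < i2 -> f i2 < f t -> f i2 < f t' -> f t' < f t) -> (forall t, 0 < t < i1 -> f t < f i2) ->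
  occurs_at pi (cp_dp J2_10) [:: i1; y; i2; i3; i4; i5].
Proof.
move=> h1 h2 h3 S1 S2 SD SL.
have Hs : sort leq (map f [:: i1; y; i2; i3; i4; i5]) = [:: f i5; f i3; f i1; f i2; f i4; f y].
  by rewrite (sort_vals (p := [:: 3;6;4;2;5;1])) //=; lia.
build_occ Hs.
Qed.

Lemma A2 x y : i1 < x < y -> y < i2 -> f i1 < f x < f i2 -> f i2 < f y -> f y < f i4 -> (forall t, i1 < t < x -> f t < f i1) -> (forall t, x < t < y -> f t < f i2) -> (forall t, y < t < i2 -> f t < f y) -> (forall t t', y < t -> t < t' -> t' < i2 -> f i2 < f t -> f i2 < f t' -> f t' < f t) -> (forall t, 0 < t < i1 -> f t < f i2) ->
  occurs_at pi (cp_dp J2_2) [:: i1; x; y; i2; i3; i4; i5].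
Proof.
move=> h1 h2 h3 h4 h5 S1 Sxy S2 SD SL.
have Hs : sort leq (map f [:: i1; x; y; i2; i3; i4; i5]) = [:: f i5; f i3; f i1; f x; f i2; f y; f i4].
  by rewrite (sort_vals (p := [:: 3;4;6;5;2;7;1])) //=; lia.
build_occ Hs.
Qed.

Lemma A5 x y : i1 < x < y -> y < i2 -> f i1 < f x < f i2 -> f i2 < f y -> f i4 < f y -> (forall t, i1 < t < x -> f t < f i1) -> (forall t, x < t < y -> f t < f i2) -> (forall t, y < t < i2 -> f t < f y) -> (forall t t', y < t -> t < t' -> t' < i2 -> f i2 < f t -> f i2 < f t' -> f t' < f t) -> (forall t, 0 < t < i1 -> f t < f i2) ->
  occurs_at pi (cp_dp J2_5) [:: i1; x; y; i2; i3; i4; i5].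
Proof.
move=> h1 h2 h3 h4 h5 S1 Sxy S2 SD SL.
have Hs : sort leq (map f [:: i1; x; y; i2; i3; i4; i5]) = [:: f i5; f i3; f i1; f x; f i2; f i4; f y].
  by rewrite (sort_vals (p := [:: 3;4;7;5;2;6;1])) //=; lia.
build_occ Hs.
Qed.

Lemma A8 pz y : 0 < pz < i1 -> i1 < y < i2 -> f i2 < f y -> f y < f pz < f i4 -> (forall t, pz < t < i1 -> f t < f i2) -> (forall t, i1 < t < y -> f t < f i1) -> (forall t, y < t < i2 -> f t < f y) -> (forall t t', y < t -> t < t' -> t' < i2 -> f i2 < f t -> f i2 < f t' -> f t' < f t) ->
  occurs_at pi (cp_dp J2_8) [:: pz; i1; y; i2; i3; i4; i5].
Proof.
move=> h0 h1 h2 h3 Sz S1 S2 SD.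
have Hs : sort leq (map f [:: pz; i1; y; i2; i3; i4; i5]) = [:: f i5; f i3; f i1; f i2; f y; f pz; f i4].
  by rewrite (sort_vals (p := [:: 6;3;5;4;2;7;1])) //=; lia.
build_occ Hs.
Qed.

Lemma A9 pz y : 0 < pz < i1 -> i1 < y < i2 -> f i2 < f y -> f y < f i4 < f pz -> (forall t, pz < t < i1 -> f t < f i2) -> (forall t, i1 < t < y -> f t < f i1) -> (forall t, y < t < i2 -> f t < f y) -> (forall t t', y < t -> t < t' -> t' < i2 -> f i2 < f t -> f i2 < f t' -> f t' < f t) ->
  occurs_at pi (cp_dp J2_9) [:: pz; i1; y; i2; i3; i4; i5].
Proof.
move=> h0 h1 h2 h3 Sz S1 S2 SD.
have Hs : sort leq (map f [:: pz; i1; y; i2; i3; i4; i5]) = [:: f i5; f i3; f i1; f i2; f y; f i4; f pz].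
  by rewrite (sort_vals (p := [:: 7;3;5;4;2;6;1])) //=; lia.
build_occ Hs.
Qed.

Lemma A11 pz y : 0 < pz < i1 -> i1 < y < i2 -> f i2 < f y -> f i4 < f y < f pz -> (forall t, pz < t < i1 -> f t < f i2) -> (forall t, i1 < t < y -> f t < f i1) -> (forall t, y < t < i2 -> f t < f y) -> (forall t t', y < t -> t < t' -> t' < i2 -> f i2 < f t -> f i2 < f t' -> f t' < f t) ->
  occurs_at pi (cp_dp J2_11) [:: pz; i1; y; i2; i3; i4; i5].
Proof.
move=> h0 h1 h2 h3 Sz S1 S2 SD.
have Hs : sort leq (map f [:: pz; i1; y; i2; i3; i4; i5]) = [:: f i5; f i3; f i1; f i2; f i4; f y; f pz].
  by rewrite (sort_vals (p := [:: 7;3;6;4;2;5;1])) //=; lia.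
build_occ Hs.
Qed.

Lemma A3 pz x y : 0 < pz < i1 -> i1 < x < y -> y < i2 -> f i1 < f x < f i2 -> f i2 < f y -> f y < f pz < f i4 -> (forall t, pz < t < i1 -> f t < f i2) -> (forall t, i1 < t < x -> f t < f i1) -> (forall t, x < t < y -> f t < f i2) -> (forall t, y < t < i2 -> f t < f y) -> (forall t t', y < t -> t < t' -> t' < i2 -> f i2 < f t -> f i2 < f t' -> f t' < f t) ->
  occurs_at pi (cp_dp J2_3) [:: pz; i1; x; y; i2; i3; i4; i5].
Proof.
move=> h0 h1 h2 h3 h4 h5 Sz S1 Sxy S2 SD.
have Hs : sort leq (map f [:: pz; i1; x; y; i2; i3; i4; i5]) = [:: f i5; f i3; f i1; f x; f i2; f y; f pz; f i4].
  by rewrite (sort_vals (p := [:: 7;3;4;6;5;2;8;1])) //=; lia.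
build_occ Hs.
Qed.

Lemma A4 pz x y : 0 < pz < i1 -> i1 < x < y -> y < i2 -> f i1 < f x < f i2 -> f i2 < f y -> f y < f i4 < f pz -> (forall t, pz < t < i1 -> f t < f i2) -> (forall t, i1 < t < x -> f t < f i1) -> (forall t, x < t < y -> f t < f i2) -> (forall t, y < t < i2 -> f t < f y) -> (forall t t', y < t -> t < t' -> t' < i2 -> f i2 < f t -> f i2 < f t' -> f t' < f t) ->
  occurs_at pi (cp_dp J2_4) [:: pz; i1; x; y; i2; i3; i4; i5].
Proof.
move=> h0 h1 h2 h3 h4 h5 Sz S1 Sxy S2 SD.
have Hs : sort leq (map f [:: pz; i1; x; y; i2; i3; i4; i5]) = [:: f i5; f i3; f i1; f x; f i2; f y; f i4; f pz].
  by rewrite (sort_vals (p := [:: 8;3;4;6;5;2;7;1])) //=; lia.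
build_occ Hs.
Qed.

Lemma A6 pz x y : 0 < pz < i1 -> i1 < x < y -> y < i2 -> f i1 < f x < f i2 -> f i2 < f y -> f i4 < f y < f pz -> (forall t, pz < t < i1 -> f t < f i2) -> (forall t, i1 < t < x -> f t < f i1) -> (forall t, x < t < y -> f t < f i2) -> (forall t, y < t < i2 -> f t < f y) -> (forall t t', y < t -> t < t' -> t' < i2 -> f i2 < f t -> f i2 < f t' -> f t' < f t) ->
  occurs_at pi (cp_dp J2_6) [:: pz; i1; x; y; i2; i3; i4; i5].
Proof.
move=> h0 h1 h2 h3 h4 h5 Sz S1 Sxy S2 SD.
have Hs : sort leq (map f [:: pz; i1; x; y; i2; i3; i4; i5]) = [:: f i5; f i3; f i1; f x; f i2; f i4; f y; f pz].
  by rewrite (sort_vals (p := [:: 8;3;4;7;5;2;6;1])) //=; lia.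
build_occ Hs.
Qed.

Lemma A_dir : ~ Viol -> exists2 J, In J J2_list &
  exists q, occurs_at pi (cp_dp J) q /\ uncircled J q = [:: i1; i2; i3; i4; i5].
Proof.
move=> nV.
have inj2 : forall u v, 0 < u <= n -> 0 < v <= n -> u != v -> f u != f v.
  move=> u v hu hv; apply: contra => /eqP e; apply/eqP; exact: inj' e.
have nV1 : forall p r, i1 < p -> p < r -> r < i2 -> f i2 < f p -> f r < f p.
  move=> p r h1 h2 h3 h4; have := inj2 p r ltac:(lia) ltac:(lia) ltac:(lia).
  case: (ltnP (f p) (f r)) => h5 h6; last lia; exfalso; apply: nV; left; exists p, r; lia.
have nV2 : forall p r, 0 < p < i1 -> i1 < r < i2 -> f i2 < f p ->
    (forall t, p < t < i1 -> f t < f p) -> f r < f p.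
  move=> p r h1 h2 h3 h4; have := inj2 p r ltac:(lia) ltac:(lia) ltac:(lia).
  case: (ltnP (f p) (f r)) => h5 h6; last lia; exfalso; apply: nV; right; exists p, r; do 3 (split; first lia); exact: h4.
case: (ex_or_all (fun t => f t < f i1) i1 i2) => [noC | [x0 [hx0 hnx0]]].
  exists J2_12; first by rewrite /=; tauto.
  exists [:: i1; i2; i3; i4; i5]; split => //; exact: A12.
have exX : exists t, (i1 < t < i2) && (f i1 < f t).
  exists x0; have := inj2 x0 i1 ltac:(lia) ltac:(lia) ltac:(lia); lia.
case: (ex_minnP exX) => x /andP [hx hfx] xmin.
have S1x : forall t, i1 < t < x -> f t < f i1.
  move=> t ht; have := inj2 t i1 ltac:(lia) ltac:(lia) ltac:(lia).
  case: (ltnP (f i1) (f t)) => h; last lia.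
  have := xmin t; rewrite h andbT => /(_ ltac:(lia)); lia.
case: (ex_or_all (fun t => f t < f i2) i1 i2) => [noD | [y0 [hy0 hny0]]].
  exists J2_1; first by rewrite /=; tauto.
  exists [:: i1; x; i2; i3; i4; i5]; split => //; apply: A1 => //.
  - have := noD x ltac:(lia); lia.
  - move=> t ht; apply: noD; lia.
have exY : exists t, (i1 < t < i2) && (f i2 < f t).
  exists y0; have := inj2 y0 i2 ltac:(lia) ltac:(lia) ltac:(lia); lia.
case: (ex_minnP exY) => y /andP [hy hfy] ymin.
have Sy : forall t, i1 < t < y -> f t < f i2.
  move=> t ht; have := inj2 t i2 ltac:(lia) ltac:(lia) ltac:(lia).
  case: (ltnP (f i2) (f t)) => h; last lia.
  have := ymin t; rewrite h andbT => /(_ ltac:(lia)); lia.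
have hxy : x <= y by apply: xmin; apply/andP; split; lia.
have S2 : forall t, y < t < i2 -> f t < f y.
  move=> t ht; case: (ltnP (f i2) (f t)) => h; first by apply: nV1 => //; lia.
  lia.
have SD : forall t t', y < t -> t < t' -> t' < i2 -> f i2 < f t -> f i2 < f t' -> f t' < f t.
  move=> t t' h1 h2 h3 h4 h5; apply: nV1 => //; lia.
have hye : f y != f i4 by apply: inj2; lia.
case: (ex_or_all (fun t => f t < f i2) 0 i1) => [noL | [z0 [hz0 hnz0]]].
  case: (ltngtP x y) => hxy'.
  - have hfx2 : f x < f i2 by apply: Sy; lia.
    case: (ltngtP (f y) (f i4)) => hye'.
    + exists J2_2; first by rewrite /=; tauto.
      exists [:: i1; x; y; i2; i3; i4; i5]; split => //; apply: A2 => //; try lia; move=> t ht; apply: Sy; lia.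
    + exists J2_5; first by rewrite /=; tauto.
      exists [:: i1; x; y; i2; i3; i4; i5]; split => //; apply: A5 => //; try lia; move=> t ht; apply: Sy; lia.
    + by rewrite hye' eqxx in hye.
  - lia.
  - subst y.
    case: (ltngtP (f x) (f i4)) => hye'.
    + exists J2_7; first by rewrite /=; tauto.
      exists [:: i1; x; i2; i3; i4; i5]; split => //; apply: A7 => //; lia.
    + exists J2_10; first by rewrite /=; tauto.
      exists [:: i1; x; i2; i3; i4; i5]; split => //; apply: A10 => //; lia.
    + by rewrite hye' eqxx in hye.
have exZ : exists t, (0 < t < i1) && (f i2 < f t).
  exists z0; have := inj2 z0 i2 ltac:(lia) ltac:(lia) ltac:(lia); lia.
have ubZ : forall t, (0 < t < i1) && (f i2 < f t) -> t <= i1 by move=> t; lia.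
case: (ex_maxnP exZ ubZ) => pz /andP [hpz hfz] zmax.
have Sz : forall t, pz < t < i1 -> f t < f i2.
  move=> t ht; have := inj2 t i2 ltac:(lia) ltac:(lia) ltac:(lia).
  case: (ltnP (f i2) (f t)) => h; last lia.
  have := zmax t; rewrite h andbT => /(_ ltac:(lia)); lia.
have hyz : f y < f pz.
  apply: nV2 => //; try lia. move=> t ht; have := Sz t ht; lia.
have hze : f pz != f i4 by apply: inj2; lia.
case: (ltngtP x y) => hxy'.
- have hfx2 : f x < f i2 by apply: Sy; lia.
  case: (ltngtP (f y) (f i4)) => hye'.
  + case: (ltngtP (f pz) (f i4)) => hze'.
    * exists J2_3; first by rewrite /=; tauto.
      exists [:: pz; i1; x; y; i2; i3; i4; i5]; split => //; apply: A3 => //; try lia; move=> t ht; apply: Sy; lia.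
    * exists J2_4; first by rewrite /=; tauto.
      exists [:: pz; i1; x; y; i2; i3; i4; i5]; split => //; apply: A4 => //; try lia; move=> t ht; apply: Sy; lia.
    * by rewrite hze' eqxx in hze.
  + exists J2_6; first by rewrite /=; tauto.
    exists [:: pz; i1; x; y; i2; i3; i4; i5]; split => //; apply: A6 => //; try lia; move=> t ht; apply: Sy; lia.
  + by rewrite hye' eqxx in hye.
- lia.
- subst y.
  case: (ltngtP (f x) (f i4)) => hye'.
  + case: (ltngtP (f pz) (f i4)) => hze'.
    * exists J2_8; first by rewrite /=; tauto.
      exists [:: pz; i1; x; i2; i3; i4; i5]; split => //; apply: A8 => //; lia.
    * exists J2_9; first by rewrite /=; tauto.
      exists [:: pz; i1; x; i2; i3; i4; i5]; split => //; apply: A9 => //; lia.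
    * by rewrite hze' eqxx in hze.
  + exists J2_11; first by rewrite /=; tauto.
    exists [:: pz; i1; x; i2; i3; i4; i5]; split => //; apply: A11 => //; lia.
  + by rewrite hye' eqxx in hye.
Qed.

Lemma R_noD : (forall t, i1 < t < i2 -> f t < f i2) -> ~ Viol.
Proof.
move=> S [[p [r Hv]]|[p [r [Hp1 [Hr1 [Hv Hall]]]]]]; have := S r; lia.
Qed.

Lemma R_rbound y : i1 < y < i2 -> f i2 < f y ->
  (forall t, i1 < t < y -> f t < f i2) -> (forall t, y < t < i2 -> f t < f y) ->
  forall r, i1 < r < i2 -> f r <= f y.
Proof.
move=> hy hfy Sb S2 r hr; case: (ltngtP r y) => h.
- have := Sb r; lia.
- have := S2 r; lia.
- by subst r.
Qed.

Lemma R_V1 y : i1 < y < i2 -> f i2 < f y ->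
  (forall t, i1 < t < y -> f t < f i2) -> (forall t, y < t < i2 -> f t < f y) ->
  (forall t t', y < t -> t < t' -> t' < i2 -> f i2 < f t < f y -> f i2 < f t' < f y -> f t' < f t) ->
  forall p r, i1 < p < r -> r < i2 -> f i2 < f p < f r -> False.
Proof.
move=> hy hfy Sb S2 SD p r hp hr hv; case: (ltngtP p y) => h.
- have := Sb p; lia.
- have := S2 p; have := S2 r; have := SD p r; lia.
- subst p; have := S2 r; lia.
Qed.

Lemma R_noZ y : i1 < y < i2 -> f i2 < f y ->
  (forall t, i1 < t < y -> f t < f i2) -> (forall t, y < t < i2 -> f t < f y) ->
  (forall t t', y < t -> t < t' -> t' < i2 -> f i2 < f t < f y -> f i2 < f t' < f y -> f t' < f t) ->
  (forall t, 0 < t < i1 -> ~~ (f i2 < f t < f y)) -> ~ Viol.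
Proof.
move=> hy hfy Sb S2 SD SL [[p [r [h1 [h2 h3]]]]|[p [r [Hp1 [Hr1 [Hv Hall]]]]]].
  exact: (R_V1 hy hfy Sb S2 SD h1 h2 h3).
have := R_rbound hy hfy Sb S2 Hr1; have := SL p Hp1; lia.
Qed.

Lemma R_Z pz y : 0 < pz < i1 -> f y < f pz -> (forall t, pz < t < i1 -> f t < f i2) ->
  i1 < y < i2 -> f i2 < f y ->
  (forall t, i1 < t < y -> f t < f i2) -> (forall t, y < t < i2 -> f t < f y) ->
  (forall t t', y < t -> t < t' -> t' < i2 -> f i2 < f t < f y -> f i2 < f t' < f y -> f t' < f t) ->
  ~ Viol.
Proof.
move=> hz hzy Sz hy hfy Sb S2 SD [[p [r [h1 [h2 h3]]]]|[p [r [Hp1 [Hr1 [Hv Hall]]]]]].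
  exact: (R_V1 hy hfy Sb S2 SD h1 h2 h3).
have := R_rbound hy hfy Sb S2 Hr1; case: (ltngtP p pz) => h.
- have := Hall pz; lia.
- have := Sz p; lia.
- subst p; lia.
Qed.

Ltac colsum Hsh Hsort hr bs :=
  let t := fresh "t" in let ht := fresh "ht" in let tn := fresh "tn" in
  intros t ht; have tn : 0 < t <= n := ltac:(lia);
  have := sub_shade Hsh (bs := bs) isT tn;
  have := inj_list Hp tn hr ltac:(rewrite !inE; lia);
  have := val_range Hp tn; rewrite /in_box /iext /vext Hsort /= ?ht /=; lia.

Lemma B1 q : occurs_at pi (cp_dp J2_1) q -> uncircled J2_1 q = [:: i1; i2; i3; i4; i5] -> ~ Viol.
Proof.
rewrite /occurs_at => /and3P [/and4P [/eqP sq hs hr hcl] Hsh Hdec].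
case: q sq hs hr hcl Hsh Hdec => [|q1 [|q2 [|q3 [|q4 [|q5 [|q6 [|]]]]]]] // _ hs hr hcl Hsh Hdec.
rewrite /uncircled /= => [[e0 e1 e2 e3 e4]]; subst q1 q3 q4 q5 q6.
rename q2 into x.
have hr' := hr; rewrite /= in hs hr' hcl.
have Hsort : sort leq (map f [:: i1; x; i2; i3; i4; i5]) = [:: f i5; f i3; f i1; f x; f i2; f i4].
  by rewrite (sort_vals (p := [:: 3;4;5;2;6;1])) //=; lia.
have Hch : [&& f i5 < f i3, f i3 < f i1, f i1 < f x, f x < f i2 & f i2 < f i4] by lia.
clear hcl.
have S1 : forall t, i1 < t < x -> f t < f i1.
  colsum Hsh Hsort hr [:: (1,3); (1,4); (1,5); (1,6)].
have S2 : forall t, x < t < i2 -> f t < f i2.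
  colsum Hsh Hsort hr [:: (2,5); (2,6)].
apply: R_noD => t ht; have := S1 t; have := S2 t; case: (eqVneq t x) => [->|?]; lia.
Qed.

Lemma B7 q : occurs_at pi (cp_dp J2_7) q -> uncircled J2_7 q = [:: i1; i2; i3; i4; i5] -> ~ Viol.
Proof.
rewrite /occurs_at => /and3P [/and4P [/eqP sq hs hr hcl] Hsh Hdec].
case: q sq hs hr hcl Hsh Hdec => [|q1 [|q2 [|q3 [|q4 [|q5 [|q6 [|]]]]]]] // _ hs hr hcl Hsh Hdec.
rewrite /uncircled /= => [[e0 e1 e2 e3 e4]]; subst q1 q3 q4 q5 q6.
rename q2 into y.
have hr' := hr; rewrite /= in hs hr' hcl.
have Hsort : sort leq (map f [:: i1; y; i2; i3; i4; i5]) = [:: f i5; f i3; f i1; f i2; f y; f i4].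
  by rewrite (sort_vals (p := [:: 3;5;4;2;6;1])) //=; lia.
have Hch : [&& f i5 < f i3, f i3 < f i1, f i1 < f i2, f i2 < f y & f y < f i4] by lia.
clear hcl.
have S1 : forall t, i1 < t < y -> f t < f i1.
  colsum Hsh Hsort hr [:: (1,3); (1,4); (1,5); (1,6)].
have S2 : forall t, y < t < i2 -> f t < f y.
  colsum Hsh Hsort hr [:: (2,5); (2,6)].
have SL : forall t, 0 < t < i1 -> ~~ (f i2 < f t < f y).
  colsum Hsh Hsort hr [:: (0,4)].
have SD : forall t t', y < t -> t < t' -> t' < i2 -> f i2 < f t < f y -> f i2 < f t' < f y -> f t' < f t.
  move/sorted_gtn_iff: Hdec => Hdec t t' h1 h2 h3 h4 h5; apply: Hdec; try lia;
  have tn : 0 < t <= n := ltac:(lia); have tn' : 0 < t' <= n := ltac:(lia);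
  have e1 : f t <> f i4 := fun E => ltac:(have := inj' tn (ltac:(lia) : 0 < i4 <= n) E; lia);
  have e2 : f t' <> f i4 := fun E => ltac:(have := inj' tn' (ltac:(lia) : 0 < i4 <= n) E; lia);
  rewrite /= /in_box /iext /vext Hsort /=; lia.
apply: (R_noZ (y:=y)) => //; try lia; move=> t ht; have := S1 t ht; lia.
Qed.

Lemma B10 q : occurs_at pi (cp_dp J2_10) q -> uncircled J2_10 q = [:: i1; i2; i3; i4; i5] -> ~ Viol.
Proof.
rewrite /occurs_at => /and3P [/and4P [/eqP sq hs hr hcl] Hsh Hdec].
case: q sq hs hr hcl Hsh Hdec => [|q1 [|q2 [|q3 [|q4 [|q5 [|q6 [|]]]]]]] // _ hs hr hcl Hsh Hdec.
rewrite /uncircled /= => [[e0 e1 e2 e3 e4]]; subst q1 q3 q4 q5 q6.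
rename q2 into y.
have hr' := hr; rewrite /= in hs hr' hcl.
have Hsort : sort leq (map f [:: i1; y; i2; i3; i4; i5]) = [:: f i5; f i3; f i1; f i2; f i4; f y].
  by rewrite (sort_vals (p := [:: 3;6;4;2;5;1])) //=; lia.
have Hch : [&& f i5 < f i3, f i3 < f i1, f i1 < f i2, f i2 < f i4 & f i4 < f y] by lia.
clear hcl.
have S1 : forall t, i1 < t < y -> f t < f i1.
  colsum Hsh Hsort hr [:: (1,3); (1,4); (1,5); (1,6)].
have S2 : forall t, y < t < i2 -> f t < f y.
  colsum Hsh Hsort hr [:: (2,6)].
have SL : forall t, 0 < t < i1 -> ~~ (f i2 < f t < f y).
  colsum Hsh Hsort hr [:: (0,4); (0,5)].
have SD : forall t t', y < t -> t < t' -> t' < i2 -> f i2 < f t < f y -> f i2 < f t' < f y -> f t' < f t.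
  move/sorted_gtn_iff: Hdec => Hdec t t' h1 h2 h3 h4 h5; apply: Hdec; try lia;
  have tn : 0 < t <= n := ltac:(lia); have tn' : 0 < t' <= n := ltac:(lia);
  have e1 : f t <> f i4 := fun E => ltac:(have := inj' tn (ltac:(lia) : 0 < i4 <= n) E; lia);
  have e2 : f t' <> f i4 := fun E => ltac:(have := inj' tn' (ltac:(lia) : 0 < i4 <= n) E; lia);
  rewrite /= /in_box /iext /vext Hsort /=; lia.
apply: (R_noZ (y:=y)) => //; try lia; move=> t ht; have := S1 t ht; lia.
Qed.

Lemma B2 q : occurs_at pi (cp_dp J2_2) q -> uncircled J2_2 q = [:: i1; i2; i3; i4; i5] -> ~ Viol.
Proof.
rewrite /occurs_at => /and3P [/and4P [/eqP sq hs hr hcl] Hsh Hdec].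
case: q sq hs hr hcl Hsh Hdec => [|q1 [|q2 [|q3 [|q4 [|q5 [|q6 [|q7 [|]]]]]]]] // _ hs hr hcl Hsh Hdec.
rewrite /uncircled /= => [[e0 e1 e2 e3 e4]]; subst q1 q4 q5 q6 q7.
rename q2 into x.
rename q3 into y.
have hr' := hr; rewrite /= in hs hr' hcl.
have Hsort : sort leq (map f [:: i1; x; y; i2; i3; i4; i5]) = [:: f i5; f i3; f i1; f x; f i2; f y; f i4].
  by rewrite (sort_vals (p := [:: 3;4;6;5;2;7;1])) //=; lia.
have Hch : [&& f i5 < f i3, f i3 < f i1, f i1 < f x, f x < f i2, f i2 < f y & f y < f i4] by lia.
clear hcl.
have S1 : forall t, i1 < t < x -> f t < f i1.
  colsum Hsh Hsort hr [:: (1,3); (1,4); (1,5); (1,6); (1,7)].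
have Sxy : forall t, x < t < y -> f t < f i2.
  colsum Hsh Hsort hr [:: (2,5); (2,6); (2,7)].
have S2 : forall t, y < t < i2 -> f t < f y.
  colsum Hsh Hsort hr [:: (3,6); (3,7)].
have SL : forall t, 0 < t < i1 -> ~~ (f i2 < f t < f y).
  colsum Hsh Hsort hr [:: (0,5)].
have SD : forall t t', y < t -> t < t' -> t' < i2 -> f i2 < f t < f y -> f i2 < f t' < f y -> f t' < f t.
  move/sorted_gtn_iff: Hdec => Hdec t t' h1 h2 h3 h4 h5; apply: Hdec; try lia;
  have tn : 0 < t <= n := ltac:(lia); have tn' : 0 < t' <= n := ltac:(lia);
  have e1 : f t <> f i4 := fun E => ltac:(have := inj' tn (ltac:(lia) : 0 < i4 <= n) E; lia);
  have e2 : f t' <> f i4 := fun E => ltac:(have := inj' tn' (ltac:(lia) : 0 < i4 <= n) E; lia);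
  rewrite /= /in_box /iext /vext Hsort /=; lia.
apply: (R_noZ (y:=y)) => //; try lia; move=> t ht; have := S1 t; have := Sxy t; case: (eqVneq t x) => [->|?]; lia.
Qed.

Lemma B5 q : occurs_at pi (cp_dp J2_5) q -> uncircled J2_5 q = [:: i1; i2; i3; i4; i5] -> ~ Viol.
Proof.
rewrite /occurs_at => /and3P [/and4P [/eqP sq hs hr hcl] Hsh Hdec].
case: q sq hs hr hcl Hsh Hdec => [|q1 [|q2 [|q3 [|q4 [|q5 [|q6 [|q7 [|]]]]]]]] // _ hs hr hcl Hsh Hdec.
rewrite /uncircled /= => [[e0 e1 e2 e3 e4]]; subst q1 q4 q5 q6 q7.
rename q2 into x.
rename q3 into y.
have hr' := hr; rewrite /= in hs hr' hcl.
have Hsort : sort leq (map f [:: i1; x; y; i2; i3; i4; i5]) = [:: f i5; f i3; f i1; f x; f i2; f i4; f y].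
  by rewrite (sort_vals (p := [:: 3;4;7;5;2;6;1])) //=; lia.
have Hch : [&& f i5 < f i3, f i3 < f i1, f i1 < f x, f x < f i2, f i2 < f i4 & f i4 < f y] by lia.
clear hcl.
have S1 : forall t, i1 < t < x -> f t < f i1.
  colsum Hsh Hsort hr [:: (1,3); (1,4); (1,5); (1,6); (1,7)].
have Sxy : forall t, x < t < y -> f t < f i2.
  colsum Hsh Hsort hr [:: (2,5); (2,6); (2,7)].
have S2 : forall t, y < t < i2 -> f t < f y.
  colsum Hsh Hsort hr [:: (3,7)].
have SL : forall t, 0 < t < i1 -> ~~ (f i2 < f t < f y).
  colsum Hsh Hsort hr [:: (0,5); (0,6)].
have SD : forall t t', y < t -> t < t' -> t' < i2 -> f i2 < f t < f y -> f i2 < f t' < f y -> f t' < f t.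
  move/sorted_gtn_iff: Hdec => Hdec t t' h1 h2 h3 h4 h5; apply: Hdec; try lia;
  have tn : 0 < t <= n := ltac:(lia); have tn' : 0 < t' <= n := ltac:(lia);
  have e1 : f t <> f i4 := fun E => ltac:(have := inj' tn (ltac:(lia) : 0 < i4 <= n) E; lia);
  have e2 : f t' <> f i4 := fun E => ltac:(have := inj' tn' (ltac:(lia) : 0 < i4 <= n) E; lia);
  rewrite /= /in_box /iext /vext Hsort /=; lia.
apply: (R_noZ (y:=y)) => //; try lia; move=> t ht; have := S1 t; have := Sxy t; case: (eqVneq t x) => [->|?]; lia.
Qed.

Lemma B8 q : occurs_at pi (cp_dp J2_8) q -> uncircled J2_8 q = [:: i1; i2; i3; i4; i5] -> ~ Viol.
Proof.
rewrite /occurs_at => /and3P [/and4P [/eqP sq hs hr hcl] Hsh Hdec].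
case: q sq hs hr hcl Hsh Hdec => [|q1 [|q2 [|q3 [|q4 [|q5 [|q6 [|q7 [|]]]]]]]] // _ hs hr hcl Hsh Hdec.
rewrite /uncircled /= => [[e0 e1 e2 e3 e4]]; subst q2 q4 q5 q6 q7.
rename q1 into pz.
rename q3 into y.
have hr' := hr; rewrite /= in hs hr' hcl.
have Hsort : sort leq (map f [:: pz; i1; y; i2; i3; i4; i5]) = [:: f i5; f i3; f i1; f i2; f y; f pz; f i4].
  by rewrite (sort_vals (p := [:: 6;3;5;4;2;7;1])) //=; lia.
have Hch : [&& f i5 < f i3, f i3 < f i1, f i1 < f i2, f i2 < f y, f y < f pz & f pz < f i4] by lia.
clear hcl.
have Sz : forall t, pz < t < i1 -> f t < f i2.
  colsum Hsh Hsort hr [:: (1,4); (1,5); (1,6); (1,7)].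
have S1 : forall t, i1 < t < y -> f t < f i1.
  colsum Hsh Hsort hr [:: (2,3); (2,4); (2,5); (2,6); (2,7)].
have S2 : forall t, y < t < i2 -> f t < f y.
  colsum Hsh Hsort hr [:: (3,5); (3,6); (3,7)].
have SD : forall t t', y < t -> t < t' -> t' < i2 -> f i2 < f t < f y -> f i2 < f t' < f y -> f t' < f t.
  move/sorted_gtn_iff: Hdec => Hdec t t' h1 h2 h3 h4 h5; apply: Hdec; try lia;
  have tn : 0 < t <= n := ltac:(lia); have tn' : 0 < t' <= n := ltac:(lia);
  have e1 : f t <> f i4 := fun E => ltac:(have := inj' tn (ltac:(lia) : 0 < i4 <= n) E; lia);
  have e2 : f t' <> f i4 := fun E => ltac:(have := inj' tn' (ltac:(lia) : 0 < i4 <= n) E; lia);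
  rewrite /= /in_box /iext /vext Hsort /=; lia.
apply: (R_Z (pz:=pz) (y:=y)) => //; try lia; move=> t ht; have := S1 t ht; lia.
Qed.

Lemma B9 q : occurs_at pi (cp_dp J2_9) q -> uncircled J2_9 q = [:: i1; i2; i3; i4; i5] -> ~ Viol.
Proof.
rewrite /occurs_at => /and3P [/and4P [/eqP sq hs hr hcl] Hsh Hdec].
case: q sq hs hr hcl Hsh Hdec => [|q1 [|q2 [|q3 [|q4 [|q5 [|q6 [|q7 [|]]]]]]]] // _ hs hr hcl Hsh Hdec.
rewrite /uncircled /= => [[e0 e1 e2 e3 e4]]; subst q2 q4 q5 q6 q7.
rename q1 into pz.
rename q3 into y.
have hr' := hr; rewrite /= in hs hr' hcl.
have Hsort : sort leq (map f [:: pz; i1; y; i2; i3; i4; i5]) = [:: f i5; f i3; f i1; f i2; f y; f i4; f pz].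
  by rewrite (sort_vals (p := [:: 7;3;5;4;2;6;1])) //=; lia.
have Hch : [&& f i5 < f i3, f i3 < f i1, f i1 < f i2, f i2 < f y, f y < f i4 & f i4 < f pz] by lia.
clear hcl.
have Sz : forall t, pz < t < i1 -> f t < f i2.
  colsum Hsh Hsort hr [:: (1,4); (1,5); (1,6); (1,7)].
have S1 : forall t, i1 < t < y -> f t < f i1.
  colsum Hsh Hsort hr [:: (2,3); (2,4); (2,5); (2,6); (2,7)].
have S2 : forall t, y < t < i2 -> f t < f y.
  colsum Hsh Hsort hr [:: (3,5); (3,6); (3,7)].
have SD : forall t t', y < t -> t < t' -> t' < i2 -> f i2 < f t < f y -> f i2 < f t' < f y -> f t' < f t.
  move/sorted_gtn_iff: Hdec => Hdec t t' h1 h2 h3 h4 h5; apply: Hdec; try lia;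
  have tn : 0 < t <= n := ltac:(lia); have tn' : 0 < t' <= n := ltac:(lia);
  have e1 : f t <> f i4 := fun E => ltac:(have := inj' tn (ltac:(lia) : 0 < i4 <= n) E; lia);
  have e2 : f t' <> f i4 := fun E => ltac:(have := inj' tn' (ltac:(lia) : 0 < i4 <= n) E; lia);
  rewrite /= /in_box /iext /vext Hsort /=; lia.
apply: (R_Z (pz:=pz) (y:=y)) => //; try lia; move=> t ht; have := S1 t ht; lia.
Qed.

Lemma B11 q : occurs_at pi (cp_dp J2_11) q -> uncircled J2_11 q = [:: i1; i2; i3; i4; i5] -> ~ Viol.
Proof.
rewrite /occurs_at => /and3P [/and4P [/eqP sq hs hr hcl] Hsh Hdec].
case: q sq hs hr hcl Hsh Hdec => [|q1 [|q2 [|q3 [|q4 [|q5 [|q6 [|q7 [|]]]]]]]] // _ hs hr hcl Hsh Hdec.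
rewrite /uncircled /= => [[e0 e1 e2 e3 e4]]; subst q2 q4 q5 q6 q7.
rename q1 into pz.
rename q3 into y.
have hr' := hr; rewrite /= in hs hr' hcl.
have Hsort : sort leq (map f [:: pz; i1; y; i2; i3; i4; i5]) = [:: f i5; f i3; f i1; f i2; f i4; f y; f pz].
  by rewrite (sort_vals (p := [:: 7;3;6;4;2;5;1])) //=; lia.
have Hch : [&& f i5 < f i3, f i3 < f i1, f i1 < f i2, f i2 < f i4, f i4 < f y & f y < f pz] by lia.
clear hcl.
have Sz : forall t, pz < t < i1 -> f t < f i2.
  colsum Hsh Hsort hr [:: (1,4); (1,5); (1,6); (1,7)].
have S1 : forall t, i1 < t < y -> f t < f i1.
  colsum Hsh Hsort hr [:: (2,3); (2,4); (2,5); (2,6); (2,7)].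
have S2 : forall t, y < t < i2 -> f t < f y.
  colsum Hsh Hsort hr [:: (3,6); (3,7)].
have SD : forall t t', y < t -> t < t' -> t' < i2 -> f i2 < f t < f y -> f i2 < f t' < f y -> f t' < f t.
  move/sorted_gtn_iff: Hdec => Hdec t t' h1 h2 h3 h4 h5; apply: Hdec; try lia;
  have tn : 0 < t <= n := ltac:(lia); have tn' : 0 < t' <= n := ltac:(lia);
  have e1 : f t <> f i4 := fun E => ltac:(have := inj' tn (ltac:(lia) : 0 < i4 <= n) E; lia);
  have e2 : f t' <> f i4 := fun E => ltac:(have := inj' tn' (ltac:(lia) : 0 < i4 <= n) E; lia);
  rewrite /= /in_box /iext /vext Hsort /=; lia.
apply: (R_Z (pz:=pz) (y:=y)) => //; try lia; move=> t ht; have := S1 t ht; lia.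
Qed.

Lemma B3 q : occurs_at pi (cp_dp J2_3) q -> uncircled J2_3 q = [:: i1; i2; i3; i4; i5] -> ~ Viol.
Proof.
rewrite /occurs_at => /and3P [/and4P [/eqP sq hs hr hcl] Hsh Hdec].
case: q sq hs hr hcl Hsh Hdec => [|q1 [|q2 [|q3 [|q4 [|q5 [|q6 [|q7 [|q8 [|]]]]]]]]] // _ hs hr hcl Hsh Hdec.
rewrite /uncircled /= => [[e0 e1 e2 e3 e4]]; subst q2 q5 q6 q7 q8.
rename q1 into pz.
rename q3 into x.
rename q4 into y.
have hr' := hr; rewrite /= in hs hr' hcl.
have Hsort : sort leq (map f [:: pz; i1; x; y; i2; i3; i4; i5]) = [:: f i5; f i3; f i1; f x; f i2; f y; f pz; f i4].
  by rewrite (sort_vals (p := [:: 7;3;4;6;5;2;8;1])) //=; lia.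
have Hch : [&& f i5 < f i3, f i3 < f i1, f i1 < f x, f x < f i2, f i2 < f y, f y < f pz & f pz < f i4] by lia.
clear hcl.
have Sz : forall t, pz < t < i1 -> f t < f i2.
  colsum Hsh Hsort hr [:: (1,5); (1,6); (1,7); (1,8)].
have S1 : forall t, i1 < t < x -> f t < f i1.
  colsum Hsh Hsort hr [:: (2,3); (2,4); (2,5); (2,6); (2,7); (2,8)].
have Sxy : forall t, x < t < y -> f t < f i2.
  colsum Hsh Hsort hr [:: (3,5); (3,6); (3,7); (3,8)].
have S2 : forall t, y < t < i2 -> f t < f y.
  colsum Hsh Hsort hr [:: (4,6); (4,7); (4,8)].
have SD : forall t t', y < t -> t < t' -> t' < i2 -> f i2 < f t < f y -> f i2 < f t' < f y -> f t' < f t.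
  move/sorted_gtn_iff: Hdec => Hdec t t' h1 h2 h3 h4 h5; apply: Hdec; try lia;
  have tn : 0 < t <= n := ltac:(lia); have tn' : 0 < t' <= n := ltac:(lia);
  have e1 : f t <> f i4 := fun E => ltac:(have := inj' tn (ltac:(lia) : 0 < i4 <= n) E; lia);
  have e2 : f t' <> f i4 := fun E => ltac:(have := inj' tn' (ltac:(lia) : 0 < i4 <= n) E; lia);
  rewrite /= /in_box /iext /vext Hsort /=; lia.
apply: (R_Z (pz:=pz) (y:=y)) => //; try lia; move=> t ht; have := S1 t; have := Sxy t; case: (eqVneq t x) => [->|?]; lia.
Qed.

Lemma B4 q : occurs_at pi (cp_dp J2_4) q -> uncircled J2_4 q = [:: i1; i2; i3; i4; i5] -> ~ Viol.
Proof.
rewrite /occurs_at => /and3P [/and4P [/eqP sq hs hr hcl] Hsh Hdec].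
case: q sq hs hr hcl Hsh Hdec => [|q1 [|q2 [|q3 [|q4 [|q5 [|q6 [|q7 [|q8 [|]]]]]]]]] // _ hs hr hcl Hsh Hdec.
rewrite /uncircled /= => [[e0 e1 e2 e3 e4]]; subst q2 q5 q6 q7 q8.
rename q1 into pz.
rename q3 into x.
rename q4 into y.
have hr' := hr; rewrite /= in hs hr' hcl.
have Hsort : sort leq (map f [:: pz; i1; x; y; i2; i3; i4; i5]) = [:: f i5; f i3; f i1; f x; f i2; f y; f i4; f pz].
  by rewrite (sort_vals (p := [:: 8;3;4;6;5;2;7;1])) //=; lia.
have Hch : [&& f i5 < f i3, f i3 < f i1, f i1 < f x, f x < f i2, f i2 < f y, f y < f i4 & f i4 < f pz] by lia.
clear hcl.
have Sz : forall t, pz < t < i1 -> f t < f i2.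
  colsum Hsh Hsort hr [:: (1,5); (1,6); (1,7); (1,8)].
have S1 : forall t, i1 < t < x -> f t < f i1.
  colsum Hsh Hsort hr [:: (2,3); (2,4); (2,5); (2,6); (2,7); (2,8)].
have Sxy : forall t, x < t < y -> f t < f i2.
  colsum Hsh Hsort hr [:: (3,5); (3,6); (3,7); (3,8)].
have S2 : forall t, y < t < i2 -> f t < f y.
  colsum Hsh Hsort hr [:: (4,6); (4,7); (4,8)].
have SD : forall t t', y < t -> t < t' -> t' < i2 -> f i2 < f t < f y -> f i2 < f t' < f y -> f t' < f t.
  move/sorted_gtn_iff: Hdec => Hdec t t' h1 h2 h3 h4 h5; apply: Hdec; try lia;
  have tn : 0 < t <= n := ltac:(lia); have tn' : 0 < t' <= n := ltac:(lia);
  have e1 : f t <> f i4 := fun E => ltac:(have := inj' tn (ltac:(lia) : 0 < i4 <= n) E; lia);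
  have e2 : f t' <> f i4 := fun E => ltac:(have := inj' tn' (ltac:(lia) : 0 < i4 <= n) E; lia);
  rewrite /= /in_box /iext /vext Hsort /=; lia.
apply: (R_Z (pz:=pz) (y:=y)) => //; try lia; move=> t ht; have := S1 t; have := Sxy t; case: (eqVneq t x) => [->|?]; lia.
Qed.

Lemma B6 q : occurs_at pi (cp_dp J2_6) q -> uncircled J2_6 q = [:: i1; i2; i3; i4; i5] -> ~ Viol.
Proof.
rewrite /occurs_at => /and3P [/and4P [/eqP sq hs hr hcl] Hsh Hdec].
case: q sq hs hr hcl Hsh Hdec => [|q1 [|q2 [|q3 [|q4 [|q5 [|q6 [|q7 [|q8 [|]]]]]]]]] // _ hs hr hcl Hsh Hdec.
rewrite /uncircled /= => [[e0 e1 e2 e3 e4]]; subst q2 q5 q6 q7 q8.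
rename q1 into pz.
rename q3 into x.
rename q4 into y.
have hr' := hr; rewrite /= in hs hr' hcl.
have Hsort : sort leq (map f [:: pz; i1; x; y; i2; i3; i4; i5]) = [:: f i5; f i3; f i1; f x; f i2; f i4; f y; f pz].
  by rewrite (sort_vals (p := [:: 8;3;4;7;5;2;6;1])) //=; lia.
have Hch : [&& f i5 < f i3, f i3 < f i1, f i1 < f x, f x < f i2, f i2 < f i4, f i4 < f y & f y < f pz] by lia.
clear hcl.
have Sz : forall t, pz < t < i1 -> f t < f i2.
  colsum Hsh Hsort hr [:: (1,5); (1,6); (1,7); (1,8)].
have S1 : forall t, i1 < t < x -> f t < f i1.
  colsum Hsh Hsort hr [:: (2,3); (2,4); (2,5); (2,6); (2,7); (2,8)].
have Sxy : forall t, x < t < y -> f t < f i2.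
  colsum Hsh Hsort hr [:: (3,5); (3,6); (3,7); (3,8)].
have S2 : forall t, y < t < i2 -> f t < f y.
  colsum Hsh Hsort hr [:: (4,7); (4,8)].
have SD : forall t t', y < t -> t < t' -> t' < i2 -> f i2 < f t < f y -> f i2 < f t' < f y -> f t' < f t.
  move/sorted_gtn_iff: Hdec => Hdec t t' h1 h2 h3 h4 h5; apply: Hdec; try lia;
  have tn : 0 < t <= n := ltac:(lia); have tn' : 0 < t' <= n := ltac:(lia);
  have e1 : f t <> f i4 := fun E => ltac:(have := inj' tn (ltac:(lia) : 0 < i4 <= n) E; lia);
  have e2 : f t' <> f i4 := fun E => ltac:(have := inj' tn' (ltac:(lia) : 0 < i4 <= n) E; lia);
  rewrite /= /in_box /iext /vext Hsort /=; lia.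
apply: (R_Z (pz:=pz) (y:=y)) => //; try lia; move=> t ht; have := S1 t; have := Sxy t; case: (eqVneq t x) => [->|?]; lia.
Qed.


Lemma main_equiv :
  (exists q : seq nat,
      occurs_at T W2 q /\
      (forall r, 1 <= r <= 4 ->
         val_at T (nth 0 q (index r (dp_pat W2))) =
         f (nth 0 [:: i1; i2; i3; i4; i5] (index r (dp_pat j2))))) <->
  (exists2 J : cpattern, In J J2_list &
      exists q : seq nat, occurs_at pi (cp_dp J) q /\ uncircled J q = [:: i1; i2; i3; i4; i5]).
Proof.
rewrite lhs_iff; split; first exact: A_dir.
case=> J hJ [q [Ho Hu]]; move: hJ Ho Hu; rewrite /J2_list /=.
case=> [<-|[<-|[<-|[<-|[<-|[<-|[<-|[<-|[<-|[<-|[<-|[<-|[]]]]]]]]]]]]].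
- exact: B1.
- exact: B2.
- exact: B3.
- exact: B4.
- exact: B5.
- exact: B6.
- exact: B7.
- exact: B8.
- exact: B9.
- exact: B10.
- exact: B11.
- exact: B12.
Qed.

End Main.

Theorem proposition3p7 (pi w : seq nat) :
  is_perm pi -> occurs_at pi j2 w ->
  ((exists q : seq nat,
      occurs_at (stack_sort pi) W2 q /\
      (forall r, 1 <= r <= 4 ->
         val_at (stack_sort pi) (nth 0 q (index r (dp_pat W2))) =
         val_at pi (nth 0 w (index r (dp_pat j2)))))
   <->
   (exists2 J : cpattern, In J J2_list &
      exists q : seq nat, occurs_at pi (cp_dp J) q /\ uncircled J q = w)).
Proof.
move=> Hp Hocc.
move: (Hocc); rewrite /occurs_at => /and3P [/and4P [/eqP sw hs hr hcl] Hsh _].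
case: w Hocc sw hs hr hcl Hsh => [|i1 [|i2 [|i3 [|i4 [|i5 [|]]]]]] // Hocc _ hs hr hcl Hsh.
have hr' := hr; rewrite /= in hs hr' hcl.
have Hsort : sort leq (map (val_at pi) [:: i1;i2;i3;i4;i5]) =
    [:: val_at pi i5; val_at pi i3; val_at pi i1; val_at pi i2; val_at pi i4].
  by rewrite (sort_vals (p := [:: 3;4;2;5;1])) //=; lia.
have Hj : forall t, i2 < t < i3 -> val_at pi t < val_at pi i2.
  move=> t ht; have tn : 0 < t <= size pi by lia.
  have := sub_shade Hsh (bs := [:: (2,4); (2,5)]) isT tn.
  have := inj_list Hp tn hr ltac:(rewrite !inE; lia).
  have := val_range Hp tn; rewrite /in_box /iext /vext Hsort /= ht /=; lia.
apply: main_equiv => //; lia.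
Qed.
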